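(* For a set $\Psi\subseteq\mathcal{K}$, let $EE^*_\Psi$ denote the optimal value of problem (P2$_\Psi$) (defined in the context) with $x_k=1$ for $k\in\Psi$ and $x_k=0$ for $k\notin\Psi$, and for each $m\in\mathcal{K}$ let $EE^*_m$ denote the optimal value of the trading-EE problem (T) for MU $m$. Let $m\in\mathcal{K}\setminus\Psi$. Say that serving MU $m$ improves the EE of the SC if $EE^*_{\Psi\cup\{m\}}>EE^*_\Psi$. Then: (1) if constraints C1 and C4 are both removed from (P2), serving MU $m$ improves the EE of the SC if and only if $EE^*_m>EE^*_\Psi$; (2) if constraint C1 is removed from (P2) (C4 kept), serving MU $m$ improves the EE of the SC if $EE^*_m>EE^*_\Psi$; (3) if constraint C4 is removed from (P2) (C1 kept), serving MU $m$ improves the EE of the SC only if $EE^*_m>EE^*_\Psi$.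
   Context: Setting: $\mathcal{K}=\{1,\dots,K\}$ macro users (MUs), $\mathcal{N}=\{1,\dots,N\}$ small-cell users (SUs). Constants: $N_0>0$, $\xi\in(0,1]$, $P_{\rm c}>0$, $P^{SC}_{\max}>0$, $R^{SC}_{\min}\ge0$; for each $k$: $W^k_{MC}>0$, $R^k_{MC}>0$, $h_k>0$, $g_{k,n}>0$ ($n\in\mathcal{N}$); for each $n$: $B^n_{SC}>0$, $g_n>0$. Let $k'\in\arg\max_{n}g_{k,n}$. Let $\rho(b,p,g)=b\log_2(1+\frac{pg}{bN_0})$ ($=0$ if $b=0$). Problem (P2$_\Psi$): with $x_k=\mathbf 1[k\in\Psi]$, maximize over $p_n\ge0$, $p_{k,k'}\ge0$, $b_{k,k'}\ge0$, $q_k\ge0$, $w_k\ge0$ $$\frac{\sum_{n}\rho(B^n_{SC},p_n,g_n)+\sum_{k}x_k\rho(b_{k,k'},p_{k,k'},g_{k,k'})}{\sum_n\frac{p_n}{\xi}+\sum_kx_k\frac{p_{k,k'}}{\xi}+\sum_kx_k\frac{q_k}{\xi}+P_{\rm c}}$$ subject to C1: $\sum_np_n+\sum_kp_{k,k'}+\sum_kq_k\le P^{SC}_{\max}$; C2: $b_{k,k'}+w_k=x_kW^k_{MC}$ for all $k$; C3: $\rho(w_k,q_k,h_k)=x_kR^k_{MC}$ for all $k$; C4: $\sum_n\rho(B^n_{SC},p_n,g_n)+\sum_kx_k\rho(b_{k,k'},p_{k,k'},g_{k,k'})\ge R^{SC}_{\min}$. Problem (T) for MU $m$: maximize over $p_{m,m'}\ge0$,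 $b_{m,m'}\ge0$, $q_m\ge0$, $w_m\ge0$ the ratio $\frac{\rho(b_{m,m'},p_{m,m'},g_{m,m'})}{p_{m,m'}/\xi+q_m/\xi}$ subject to $b_{m,m'}+w_m\le W^m_{MC}$ and $\rho(w_m,q_m,h_m)\ge R^m_{MC}$ (no total power or minimum system rate constraint). *)

(* Defs.v *)
From HB Require Import structures.
From mathcomp Require Import all_boot all_order all_algebra.
From mathcomp Require Import all_classical all_reals all_analysis.
Set Implicit Arguments. Unset Strict Implicit. Unset Printing Implicit Defensive.
Import Order.TTheory GRing.Theory Num.Theory.
Local Open Scope classical_set_scope.
Local Open Scope ring_scope.

Definition rho {R : realType} (N0 b p g : R) : R :=
  if b == 0 then 0 else b * (ln (1 + p * g / (b * N0)) / ln 2).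

(* System constants: K macro users ('I_K), N small-cell users ('I_N). *)
Record sys (R : realType) (K N : nat) := Sys {
  N0 : R; xi : R; Pc : R; Pmax : R; Rmin : R;
  WMC : 'I_K -> R; RMC : 'I_K -> R; hk : 'I_K -> R;
  gkn : 'I_K -> 'I_N -> R;
  BSC : 'I_N -> R; gn : 'I_N -> R;
  kp : 'I_K -> 'I_N  (* k' : a chosen element of argmax_n g_{k,n} *) }.

Definition well_formed {R : realType} {K N : nat} (s : sys R K N) : Prop :=
  [/\ 0 < N0 s, 0 < xi s /\ xi s <= 1, 0 < Pc s, 0 < Pmax s & 0 <= Rmin s] /\
  (forall k, [/\ 0 < WMC s k, 0 < RMC s k, 0 < hk s k,
                 (forall n, 0 < gkn s k n) & (forall n, gkn s k n <= gkn s k (kp s k))]) /\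
  (forall n, 0 < BSC s n /\ 0 < gn s n).

Section P2.
Variables (R : realType) (K N : nat) (s : sys R K N).

Definition xind (Psi : {set 'I_K}) (k : 'I_K) : R := (k \in Psi)%:R.

(* total SC rate (numerator of P2, left side of C4) *)
Definition sc_rate (Psi : {set 'I_K}) (p : 'I_N -> R) (pk bk : 'I_K -> R) : R :=
  \sum_n rho (N0 s) (BSC s n) (p n) (gn s n)
  + \sum_k xind Psi k * rho (N0 s) (bk k) (pk k) (gkn s k (kp s k)).

Definition sc_power (Psi : {set 'I_K}) (p : 'I_N -> R) (pk qk : 'I_K -> R) : R :=
  \sum_n p n / xi s + \sum_k xind Psi k * (pk k / xi s)
  + \sum_k xind Psi k * (qk k / xi s) + Pc s.

(* feasibility for (P2_Psi); c1 / c4 say whether C1 / C4 are kept *)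
Definition P2_feasible (c1 c4 : bool) (Psi : {set 'I_K})
    (p : 'I_N -> R) (pk bk qk wk : 'I_K -> R) : Prop :=
  (forall n, 0 <= p n) /\
  (forall k, [/\ 0 <= pk k, 0 <= bk k, 0 <= qk k & 0 <= wk k]) /\
  (c1 -> \sum_n p n + \sum_k pk k + \sum_k qk k <= Pmax s) /\
  (forall k, bk k + wk k = xind Psi k * WMC s k) /\
  (forall k, rho (N0 s) (wk k) (qk k) (hk s k) = xind Psi k * RMC s k) /\
  (c4 -> Rmin s <= sc_rate Psi p pk bk).

(* optimal value EE*_Psi of (P2_Psi): supremum of the objective over the
   feasible set, in the extended reals (-oo if infeasible) *)
Definition EE_P2 (c1 c4 : bool) (Psi : {set 'I_K}) : \bar R :=
  ereal_sup [set y : \bar R | exists p pk bk qk wk,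
     P2_feasible c1 c4 Psi p pk bk qk wk /\
     y = (sc_rate Psi p pk bk / sc_power Psi p pk qk)%:E].

Definition EE_T (m : 'I_K) : \bar R :=
  ereal_sup [set y : \bar R | exists p b q w : R,
     [/\ 0 <= p, 0 <= b, 0 <= q & 0 <= w] /\
     b + w <= WMC s m /\ RMC s m <= rho (N0 s) w q (hk s m) /\
     y = (rho (N0 s) b p (gkn s m (kp s m)) / (p / xi s + q / xi s))%:E].

End P2.

(* Main.v *)
Require Import Defs.
From HB Require Import structures.
From mathcomp Require Import all_boot all_order all_algebra.
From mathcomp Require Import all_classical all_reals all_analysis.
From mathcomp Require Import lra ring.
Import Order.TTheory GRing.Theory Num.Theory.
Set Implicit Arguments. Unset Strict Implicit.
Local Open Scope ring_scope.


Lemma ln2_gt0 (R : realType) : 0 < ln (2 : R).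
Proof. by apply: ln_gt0; rewrite ltr1n. Qed.

Lemma ln_le_sub (R : realType) (x : R) : 0 < x -> ln x <= x - 1.
Proof.
move=> x0; have := @le_ln1Dx R (x - 1).
rewrite addrCA subrr addr0; apply; lra.
Qed.

Lemma ln_ge_sub (R : realType) (x : R) : 0 < x -> 1 - x^-1 <= ln x.
Proof.
move=> x0; have := @ln_le_sub R x^-1; rewrite invr_gt0 => /(_ x0).
rewrite lnV ?posrE //; lra.
Qed.

Lemma rho_b0 (R : realType) (N0 p g : R) : rho N0 0 p g = 0.
Proof. by rewrite /rho eqxx. Qed.

Lemma rho_ge0 (R : realType) (N0 b p g : R) :
  0 < N0 -> 0 <= b -> 0 <= p -> 0 <= g -> 0 <= rho N0 b p g.
Proof.
move=> N0p b0 p0 g0; rewrite /rho; case: eqP => // /eqP bn0.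
have bp : 0 < b by rewrite lt0r bn0.
apply: mulr_ge0 => //; apply: divr_ge0; last exact: ltW (ln2_gt0 R).
apply: ln_ge0; rewrite lerDl; apply: divr_ge0; [exact: mulr_ge0|].
by apply: mulr_ge0 => //; apply: ltW.
Qed.


Lemma rho_pos (R : realType) (N0 b p g : R) : 0 < b ->
  rho N0 b p g = b * (ln (1 + p * g / (b * N0)) / ln 2).
Proof. by move=> bp; rewrite /rho gt_eqF. Qed.

Lemma rho_mono (R : realType) (N0 b1 b2 p g : R) :
  0 < N0 -> 0 <= b1 -> b1 <= b2 -> 0 <= p -> 0 <= g ->
  rho N0 b1 p g <= rho N0 b2 p g.
Proof.
move=> N0p b10 b12 p0 g0.
have [->|b1n0] := eqVneq b1 0.
  by rewrite rho_b0; apply: rho_ge0 => //; lra.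
have b1p : 0 < b1 by rewrite lt0r b1n0.
have b2p : 0 < b2 by lra.
rewrite !rho_pos //.
set c := p * g / N0.
have c0 : 0 <= c by rewrite /c; apply: divr_ge0 => //; [exact: mulr_ge0|lra].
have e1 : p * g / (b1 * N0) = c / b1 by rewrite /c; field; lra.
have e2 : p * g / (b2 * N0) = c / b2 by rewrite /c; field; lra.
rewrite e1 e2.
set z1 := 1 + c / b1; set z2 := 1 + c / b2.
have z1p : 0 < z1 by rewrite /z1; have := divr_ge0 c0 (ltW b1p); lra.
have z2p : 0 < z2 by rewrite /z2; have := divr_ge0 c0 (ltW b2p); lra.
have H1 : ln z1 <= ln z2 + (z1 / z2 - 1).
  have -> : z1 = z2 * (z1 / z2) by field; lra.
  rewrite lnM ?posrE ?divr_gt0 //.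
  have := ln_le_sub (divr_gt0 z1p z2p).
  have -> : z2 * (z1 / z2) / z2 = z1 / z2 by field; lra.
  lra.
have H2 := ln_ge_sub z2p.
have H3 : b1 * (z1 / z2 - 1) = (b2 - b1) * (1 - z2^-1).
  rewrite /z1 /z2; field; lra.
have ln2p := (@ln2_gt0 R).
rewrite !mulrA; apply: ler_wpM2r; first by rewrite invr_ge0; lra.
have : b1 * ln z1 <= b1 * (ln z2 + (z1 / z2 - 1)) by apply: ler_wpM2l; lra.
have : (b2 - b1) * (1 - z2^-1) <= (b2 - b1) * ln z2 by apply: ler_wpM2l; lra.
nra.
Qed.

Definition qstar (R : realType) (N0 w r h : R) : R :=
  w * N0 / h * (expR (r * ln 2 / w) - 1).

Lemma rho_qstar (R : realType) (N0 w r h : R) :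
  0 < N0 -> 0 < w -> 0 < h -> rho N0 w (qstar N0 w r h) h = r.
Proof.
move=> N0p wp hp; rewrite rho_pos // /qstar.
have -> : 1 + w * N0 / h * (expR (r * ln 2 / w) - 1) * h / (w * N0)
   = expR (r * ln 2 / w) by field; lra.
rewrite expRK; have ? := (@ln2_gt0 R); field; lra.
Qed.

Lemma qstar_ge0 (R : realType) (N0 w r h : R) :
  0 < N0 -> 0 < w -> 0 < h -> 0 <= r -> 0 <= qstar N0 w r h.
Proof.
move=> N0p wp hp r0; rewrite /qstar; apply: mulr_ge0.
  by apply: divr_ge0; [apply: mulr_ge0|]; lra.
have hx : 0 <= r * ln 2 / w.
  by apply: divr_ge0; [apply: mulr_ge0 => //; have := (@ln2_gt0 R)|]; lra.
have := expR_ge1Dx (r * ln 2 / w); lra.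
Qed.

Lemma qstar_gt0 (R : realType) (N0 w r h : R) :
  0 < N0 -> 0 < w -> 0 < h -> 0 < r -> 0 < qstar N0 w r h.
Proof.
move=> N0p wp hp r0; rewrite /qstar; apply: mulr_gt0.
  by apply: divr_gt0; [apply: mulr_gt0|]; lra.
rewrite subr_gt0 expR_gt1; apply: divr_gt0; last lra.
by apply: mulr_gt0 => //; exact: ln2_gt0.
Qed.

Lemma qstar_le (R : realType) (N0 w r h q : R) :
  0 < N0 -> 0 < w -> 0 < h -> 0 <= q -> r <= rho N0 w q h -> qstar N0 w r h <= q.
Proof.
move=> N0p wp hp q0; rewrite rho_pos // => H.
have ln2p := (@ln2_gt0 R).
set x := q * h / (w * N0) in H.
have x0 : 0 <= x by rewrite /x; apply: divr_ge0; [apply: mulr_ge0|apply: mulr_ge0]; lra.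
have H' : r * ln 2 / w <= ln (1 + x).
  rewrite ler_pdivrMr //.
  have H2 : r * ln 2 <= w * (ln (1 + x) / ln 2) * ln 2 by apply: ler_wpM2r; lra.
  have E : w * (ln (1 + x) / ln 2) * ln 2 = ln (1 + x) * w by field; lra.
  lra.
have : expR (r * ln 2 / w) <= 1 + x.
  by rewrite -(lnK (_ : 1 + x \in Num.pos)) ?ler_expR // posrE; lra.
rewrite /qstar => Hx.
have -> : q = w * N0 / h * x by rewrite /x; field; lra.
apply: ler_wpM2l; first by apply: divr_ge0; [apply: mulr_ge0|]; lra.
lra.
Qed.


Definition Kc (R : realType) (N0 eps g : R) : R :=
  (ln (1 + g / (N0 * ln 2 * eps)) + 1) / ln 2.

Lemma Kc_ge0 (R : realType) (N0 eps g : R) : 0 < N0 -> 0 < eps -> 0 <= g ->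
  0 <= Kc N0 eps g.
Proof.
move=> N0p ep g0; have l2 := @ln2_gt0 R; rewrite /Kc; apply: divr_ge0; last lra.
have : 0 <= ln (1 + g / (N0 * ln 2 * eps)); last lra.
apply: ln_ge0; rewrite lerDl; apply: divr_ge0 => //.
by apply: mulr_ge0; [apply: mulr_ge0|]; lra.
Qed.

Lemma rho_lin (R : realType) (N0 b p g eps : R) :
  0 < N0 -> 0 <= b -> 0 <= p -> 0 < g -> 0 < eps ->
  rho N0 b p g <= eps * p + b * Kc N0 eps g.
Proof.
move=> N0p b0 p0 gp ep; have l2 := @ln2_gt0 R.
have Kp := Kc_ge0 N0p ep (ltW gp).
have [->|bn0] := eqVneq b 0.
  by rewrite rho_b0 mul0r addr0; apply: mulr_ge0; lra.
have bp : 0 < b by rewrite lt0r bn0.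
rewrite rho_pos //.
set x := p * g / (b * N0).
have x0 : 0 <= x by rewrite /x; apply: divr_ge0; apply: mulr_ge0; lra.
set M := 1 + g / (N0 * ln 2 * eps).
have gd : 0 <= g / (N0 * ln 2 * eps).
  by apply: divr_ge0; [lra|apply: mulr_ge0; [apply: mulr_ge0|]; lra].
have Mp : 1 <= M by rewrite /M; lra.
have M0 : 0 < M by lra.
have H1 : ln (1 + x) <= ln M + 1 + x / M.
  have -> : 1 + x = M * ((1 + x) / M) by field; lra.
  rewrite lnM ?posrE ?divr_gt0 //; last lra.
  have := ln_le_sub (_ : 0 < (1 + x) / M); rewrite divr_gt0 //; last lra.
  move=> /(_ isT) H.
  have : 1 / M <= 1 by rewrite ler_pdivrMr //; lra.
  have : (1 + x) / M = 1 / M + x / M by field; lra.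
  lra.
have H2 : b * (ln (1 + x) / ln 2) <= b * ((ln M + 1 + x / M) / ln 2).
  apply: ler_wpM2l; first lra.
  by apply: ler_wpM2r; [rewrite invr_ge0; lra|].
have E : b * ((ln M + 1 + x / M) / ln 2)
   = b * Kc N0 eps g + p * (g / (N0 * M * ln 2)).
  by rewrite /Kc -/M /x; field; lra.
have H3 : g / (N0 * M * ln 2) <= eps.
  rewrite ler_pdivrMr; last by apply: mulr_gt0; [apply: mulr_gt0|]; lra.
  have -> : eps * (N0 * M * ln 2) = eps * N0 * ln 2 + g by rewrite /M; field; lra.
  have : 0 <= eps * N0 * ln 2 by apply: mulr_ge0; [apply: mulr_ge0|]; lra.
  lra.
have H4 : p * (g / (N0 * M * ln 2)) <= p * eps by apply: ler_wpM2l.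
lra.
Qed.


Lemma xind_in (R : realType) K (Psi : {set 'I_K}) k : k \in Psi -> xind R Psi k = 1.
Proof. by rewrite /xind => ->. Qed.

Lemma xind_out (R : realType) K (Psi : {set 'I_K}) k : k \notin Psi -> xind R Psi k = 0.
Proof. by rewrite /xind => /negbTE ->. Qed.

Lemma xind_ge0 (R : realType) K (Psi : {set 'I_K}) k : 0 <= xind R Psi k.
Proof. by rewrite /xind ler0n. Qed.

Lemma xind_split (R : realType) K (Psi : {set 'I_K}) m (F G : 'I_K -> R) :
  m \notin Psi -> (forall k, k != m -> F k = G k) ->
  \sum_k xind R (m |: Psi) k * F k = \sum_k xind R Psi k * G k + F m.
Proof.
move=> mP FG.
rewrite (bigD1 m) //= [in RHS](bigD1 m) //= xind_in ?setU11 // xind_out //.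
rewrite mul1r mul0r add0r addrC; congr (_ + _); apply: eq_bigr => k km.
by rewrite FG // /xind in_setU1 (negbTE km).
Qed.


Definition upd (R : realType) K (m : 'I_K) (f : 'I_K -> R) (v : R) : 'I_K -> R :=
  fun k => if k == m then v else f k.

Lemma upd_m (R : realType) K (m : 'I_K) f (v : R) : upd m f v m = v.
Proof. by rewrite /upd eqxx. Qed.
Lemma upd_o (R : realType) K (m k : 'I_K) f (v : R) : k != m -> upd m f v k = f k.
Proof. by rewrite /upd => /negbTE ->. Qed.

Lemma split_pt (R : realType) K N (s : sys R K N) c1 (Psi : {set 'I_K}) (m : 'I_K) (p : 'I_N -> R) (pk bk qk wk : 'I_K -> R) :
  well_formed s -> m \notin Psi -> P2_feasible s c1 false (m |: Psi) p pk bk qk wk ->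
  [/\ P2_feasible s c1 false Psi p (upd m pk 0) (upd m bk 0) (upd m qk 0) (upd m wk 0),
   sc_rate s (m |: Psi) p pk bk = sc_rate s Psi p (upd m pk 0) (upd m bk 0)
      + rho (N0 s) (bk m) (pk m) (gkn s m (kp s m)),
   sc_power s (m |: Psi) p pk qk = sc_power s Psi p (upd m pk 0) (upd m qk 0)
      + (pk m / xi s + qk m / xi s),
   [/\ 0 <= pk m, 0 <= bk m, 0 <= qk m & 0 <= wk m] &
   bk m + wk m <= WMC s m /\ RMC s m <= rho (N0 s) (wk m) (qk m) (hk s m)].
Proof.
move=> [[N0p [xip xi1] Pcp Pmp Rm] [Hk Hn]] mP [Hp [Hq [HC1 [HW [HR _]]]]].
have xm : xind R (m |: Psi) m = 1 by rewrite xind_in ?setU11.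
have xo : forall k, k != m -> xind R (m |: Psi) k = xind R Psi k.
  by move=> k km; rewrite /xind in_setU1 (negbTE km).
split.
- split; first exact: Hp.
  split.
    move=> k; have [->|km] := eqVneq k m; first by rewrite !upd_m.
    by rewrite !upd_o //; exact: Hq.
  split.
    move=> /HC1 H; apply: le_trans H.
    have L : forall f : 'I_K -> R, (forall k, 0 <= f k) ->
        \sum_k upd m f 0 k <= \sum_k f k.
      move=> f f0; apply: ler_sum => k _.
      by have [->|km] := eqVneq k m; [rewrite upd_m|rewrite upd_o].
    apply: lerD; first apply: lerD => //.
    + by apply: L => k; have [] := Hq k.
    + by apply: L => k; have [] := Hq k.
  split.
    move=> k; have [->|km] := eqVneq k m.
      by rewrite !upd_m xind_out // mul0r addr0.
    by rewrite !upd_o // HW xo.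
  split => //.
  move=> k; have [->|km] := eqVneq k m.
    by rewrite !upd_m xind_out // mul0r rho_b0.
  by rewrite !upd_o // HR xo.
- rewrite /sc_rate -addrA; congr (_ + _).
  by apply: xind_split => // k km; rewrite !upd_o.
- rewrite /sc_power.
  rewrite (xind_split (G := fun k => upd m pk 0 k / xi s)) //; last first.
    by move=> k km; rewrite upd_o.
  rewrite (xind_split (G := fun k => upd m qk 0 k / xi s)) //; last first.
    by move=> k km; rewrite upd_o.
  lra.
- exact: Hq.
- have := HW m; have := HR m; rewrite xm !mul1r => -> ->; split => //.
Qed.

Lemma comb_pt (R : realType) K N (s : sys R K N) c4 (Psi : {set 'I_K}) (m : 'I_K) (p : 'I_N -> R) (pk bk qk wk : 'I_K -> R) (pm bm qm wm : R) :
  well_formed s -> m \notin Psi -> P2_feasible s false c4 Psi p pk bk qk wk ->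
  [/\ 0 <= pm, 0 <= bm, 0 <= qm & 0 <= wm] ->
  bm + wm = WMC s m -> rho (N0 s) wm qm (hk s m) = RMC s m ->
  [/\ P2_feasible s false c4 (m |: Psi) p (upd m pk pm) (upd m bk bm) (upd m qk qm) (upd m wk wm),
   sc_rate s (m |: Psi) p (upd m pk pm) (upd m bk bm) = sc_rate s Psi p pk bk
      + rho (N0 s) bm pm (gkn s m (kp s m)) &
   sc_power s (m |: Psi) p (upd m pk pm) (upd m qk qm) = sc_power s Psi p pk qk
      + (pm / xi s + qm / xi s)].
Proof.
move=> [[N0p [xip xi1] Pcp Pmp Rm] [Hk Hn]] mP [Hp [Hq [HC1 [HW [HR HC4]]]]] Hm HWm HRm.
have xm : xind R (m |: Psi) m = 1 by rewrite xind_in ?setU11.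
have xo : forall k, k != m -> xind R (m |: Psi) k = xind R Psi k.
  by move=> k km; rewrite /xind in_setU1 (negbTE km).
have Erate : sc_rate s (m |: Psi) p (upd m pk pm) (upd m bk bm) = sc_rate s Psi p pk bk
      + rho (N0 s) bm pm (gkn s m (kp s m)).
  rewrite /sc_rate -addrA; congr (_ + _).
  rewrite (xind_split (G := fun k => rho (N0 s) (bk k) (pk k) (gkn s k (kp s k)))) //.
    by rewrite !upd_m.
  by move=> k km; rewrite !upd_o.
split => //.
- split; first exact: Hp.
  split.
    move=> k; have [->|km] := eqVneq k m; first by rewrite !upd_m.
    by rewrite !upd_o //; exact: Hq.
  split => //.
  split.
    move=> k; have [->|km] := eqVneq k m; first by rewrite !upd_m xm mul1r.
    by rewrite !upd_o // HW xo.
  split.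
    move=> k; have [->|km] := eqVneq k m; first by rewrite !upd_m xm mul1r.
    by rewrite !upd_o // HR xo.
  move=> /HC4 H; rewrite Erate.
  have [_ _ _ /(_ (kp s m)) gp _] := Hk m.
  have : 0 <= rho (N0 s) bm pm (gkn s m (kp s m)).
    by case: Hm => *; apply: rho_ge0 => //; exact: ltW.
  lra.
- rewrite /sc_power.
  rewrite (xind_split (G := fun k => pk k / xi s)) //; last first.
    by move=> k km; rewrite upd_o.
  rewrite (xind_split (G := fun k => qk k / xi s)) //; last first.
    by move=> k km; rewrite upd_o.
  rewrite !upd_m; lra.
Qed.


Lemma ratio_mono (R : realType) (a a' c c' : R) :
  0 <= a -> a <= a' -> 0 < c' -> c' <= c -> a / c <= a' / c'.
Proof.
move=> a0 aa c'0 cc.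
apply: (@le_trans _ _ (a / c')).
  apply: ler_wpM2l => //; rewrite lef_pV2 ?posrE //; lra.
by apply: ler_wpM2r => //; rewrite invr_ge0; lra.
Qed.

Lemma conv_T (R : realType) K N (s : sys R K N) (m : 'I_K) (p b q w : R) :
  well_formed s -> [/\ 0 <= p, 0 <= b, 0 <= q & 0 <= w] ->
  b + w <= WMC s m -> RMC s m <= rho (N0 s) w q (hk s m) ->
  exists b' q', [/\ 0 <= b', 0 < q', b' + w = WMC s m,
    rho (N0 s) w q' (hk s m) = RMC s m &
    rho (N0 s) b p (gkn s m (kp s m)) / (p / xi s + q / xi s)
      <= rho (N0 s) b' p (gkn s m (kp s m)) / (p / xi s + q' / xi s)] /\ 0 < w.
Proof.
move=> [[N0p [xip xi1] Pcp Pmp Rm] [Hk Hn]] [p0 b0 q0 w0] HW HR.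
have [Wp Rp hp gp _] := Hk m.
have wp : 0 < w.
  rewrite lt0r w0 andbT; apply/eqP => w00; move: HR; rewrite w00 rho_b0; lra.
have gm := gp (kp s m).
exists (WMC s m - w), (qstar (N0 s) w (RMC s m) (hk s m)).
have qp := qstar_gt0 N0p wp hp Rp.
have ql := qstar_le N0p wp hp q0 HR.
split => //; split => //; first lra; first lra.
  exact: rho_qstar.
apply: ratio_mono.
- by apply: rho_ge0 => //; lra.
- by apply: rho_mono => //; lra.
- have := divr_gt0 qp xip; have : 0 <= p / xi s by apply: divr_ge0; lra.
  lra.
- apply: lerD => //; apply: ler_wpM2r => //; rewrite invr_ge0; lra.
Qed.

Definition Cb (R : realType) K N (s : sys R K N) (eps : R) : R :=
  \sum_n BSC s n * Kc (N0 s) eps (gn s n)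
  + \sum_k WMC s k * Kc (N0 s) eps (gkn s k (kp s k)).

Lemma bound_pt (R : realType) K N (s : sys R K N) c1 c4 (Psi : {set 'I_K})
  (p : 'I_N -> R) (pk bk qk wk : 'I_K -> R) (eps : R) :
  well_formed s -> P2_feasible s c1 c4 Psi p pk bk qk wk -> 0 < eps ->
  sc_rate s Psi p pk bk <= eps * sc_power s Psi p pk qk + Cb s eps.
Proof.
move=> [[N0p [xip xi1] Pcp Pmp Rm] [Hk Hn]] [Hp [Hq [HC1 [HW [HR _]]]]] ep.
have pxi : forall x, 0 <= x -> x <= x / xi s.
  move=> x x0; rewrite ler_pdivlMr //; by have := ler_wpM2l x0 xi1; rewrite mulr1.
have H1 : \sum_n rho (N0 s) (BSC s n) (p n) (gn s n)
   <= \sum_n (eps * (p n / xi s) + BSC s n * Kc (N0 s) eps (gn s n)).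
  apply: ler_sum => n _; have [Bp gp] := Hn n.
  apply: le_trans (rho_lin N0p (ltW Bp) (Hp n) gp ep) _.
  apply: lerD => //; apply: ler_wpM2l; [lra|exact: pxi].
have H2 : \sum_k xind R Psi k * rho (N0 s) (bk k) (pk k) (gkn s k (kp s k))
   <= \sum_k (eps * (xind R Psi k * (pk k / xi s))
              + WMC s k * Kc (N0 s) eps (gkn s k (kp s k))).
  apply: ler_sum => k _; have [Wp _ _ gp _] := Hk k.
  have Kp := Kc_ge0 N0p ep (ltW (gp (kp s k))).
  have [pk0 bk0 qk0 wk0] := Hq k.
  have [kP|kP] := boolP (k \in Psi).
    rewrite xind_in // !mul1r.
    apply: le_trans (rho_lin N0p bk0 pk0 (gp (kp s k)) ep) _.
    apply: lerD; first by apply: ler_wpM2l; [lra|exact: pxi].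
    apply: ler_wpM2r => //; have := HW k; rewrite xind_in // mul1r; lra.
  rewrite xind_out // !mul0r mulr0 add0r; apply: mulr_ge0 => //; lra.
have E1 : \sum_n (eps * (p n / xi s) + BSC s n * Kc (N0 s) eps (gn s n))
   = eps * \sum_n p n / xi s + \sum_n BSC s n * Kc (N0 s) eps (gn s n).
  by rewrite big_split /= mulr_sumr.
have E2 : \sum_k (eps * (xind R Psi k * (pk k / xi s))
              + WMC s k * Kc (N0 s) eps (gkn s k (kp s k)))
   = eps * \sum_k xind R Psi k * (pk k / xi s)
     + \sum_k WMC s k * Kc (N0 s) eps (gkn s k (kp s k)).
  by rewrite big_split /= mulr_sumr.
have H3 : 0 <= \sum_k xind R Psi k * (qk k / xi s).
  apply: sumr_ge0 => k _; apply: mulr_ge0; first exact: xind_ge0.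
  by apply: divr_ge0; [have [] := Hq k|lra].
rewrite /sc_rate /sc_power /Cb.
have : 0 <= eps * (\sum_k xind R Psi k * (qk k / xi s) + Pc s).
  apply: mulr_ge0; lra.
rewrite E1 in H1; rewrite E2 in H2.
rewrite !mulrDr; lra.
Qed.


Lemma rho_p0 (R : realType) (N0 b g : R) : rho N0 b 0 g = 0.
Proof. by rewrite /rho; case: eqP => // _; rewrite !mul0r addr0 ln1 mul0r mulr0. Qed.

Lemma rate_ge0 (R : realType) K N (s : sys R K N) c1 c4 (Psi : {set 'I_K})
  (p : 'I_N -> R) (pk bk qk wk : 'I_K -> R) :
  well_formed s -> P2_feasible s c1 c4 Psi p pk bk qk wk ->
  0 <= sc_rate s Psi p pk bk.
Proof.
move=> [[N0p [xip xi1] Pcp Pmp Rm] [Hk Hn]] [Hp [Hq _]].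
apply: addr_ge0; apply: sumr_ge0.
  by move=> n _; have [Bp gp] := Hn n; apply: rho_ge0 => //; exact: ltW.
move=> k _; apply: mulr_ge0; first exact: xind_ge0.
have [_ _ _ gp _] := Hk k; have [? ? _ _] := Hq k.
by apply: rho_ge0 => //; exact: ltW.
Qed.

Lemma power_pos (R : realType) K N (s : sys R K N) c1 c4 (Psi : {set 'I_K})
  (p : 'I_N -> R) (pk bk qk wk : 'I_K -> R) :
  well_formed s -> P2_feasible s c1 c4 Psi p pk bk qk wk ->
  0 < sc_power s Psi p pk qk.
Proof.
move=> [[N0p [xip xi1] Pcp Pmp Rm] [Hk Hn]] [Hp [Hq _]].
rewrite /sc_power.
have H1 : 0 <= \sum_n p n / xi s.
  by apply: sumr_ge0 => n _; apply: divr_ge0 => //; lra.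
have H2 : 0 <= \sum_k xind R Psi k * (pk k / xi s).
  apply: sumr_ge0 => k _; apply: mulr_ge0; first exact: xind_ge0.
  by apply: divr_ge0; [have [] := Hq k|lra].
have H3 : 0 <= \sum_k xind R Psi k * (qk k / xi s).
  apply: sumr_ge0 => k _; apply: mulr_ge0; first exact: xind_ge0.
  by apply: divr_ge0; [have [] := Hq k|lra].
lra.
Qed.

Lemma med_le (R : realType) (E : \bar R) (A B a c : R) : 0 < B -> 0 < c ->
  ((A / B)%:E <= E)%E -> ((a / c)%:E <= E)%E -> (((A + a) / (B + c))%:E <= E)%E.
Proof.
move=> Bp cp; case: E => [e| |] //; last by move=> *; rewrite leey.
rewrite !lee_fin !ler_pdivrMr //; last lra.
lra.
Qed.

Lemma feas_exists (R : realType) K N (s : sys R K N) c4 (Psi : {set 'I_K}) (m : 'I_K) :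
  well_formed s -> m \notin Psi ->
  exists p pk bk qk wk, P2_feasible s false c4 (m |: Psi) p pk bk qk wk.
Proof.
move=> [[N0p [xip xi1] Pcp Pmp Rm] [Hk Hn]] mP.
set P := m |: Psi.
exists (fun _ => 0),
  (fun k => if k \in P then qstar (N0 s) (WMC s k / 2) (Rmin s) (gkn s k (kp s k)) else 0),
  (fun k => if k \in P then WMC s k / 2 else 0),
  (fun k => if k \in P then qstar (N0 s) (WMC s k / 2) (RMC s k) (hk s k) else 0),
  (fun k => if k \in P then WMC s k / 2 else 0).
split => //; split.
  move=> k; have [Wp Rp hp gp _] := Hk k.
  have W2 : 0 < WMC s k / 2 by lra.
  case: (k \in P); last by split.
  split; try lra.
  - exact: qstar_ge0.
  - by apply: qstar_ge0 => //; lra.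
split => //; split.
  move=> k; rewrite /xind; case: (k \in P); last by rewrite mul0r addr0.
  by rewrite mul1r; lra.
split.
  move=> k; have [Wp Rp hp gp _] := Hk k.
  have W2 : 0 < WMC s k / 2 by lra.
  rewrite /xind; case: (k \in P); last by rewrite mul0r rho_b0.
  by rewrite mul1r rho_qstar.
move=> _; rewrite /sc_rate.
rewrite big1; last by move=> n _; rewrite rho_p0.
rewrite add0r (xind_split (G := fun k =>
   rho (N0 s) (if k \in P then WMC s k / 2 else 0)
        (if k \in P then qstar (N0 s) (WMC s k / 2) (Rmin s) (gkn s k (kp s k)) else 0)
        (gkn s k (kp s k)))) //.
have [Wp Rp hp gp _] := Hk m.
have W2 : 0 < WMC s m / 2 by lra.
rewrite /P setU11 rho_qstar //.
have : 0 <= \sum_k xind R Psi k * rho (N0 s) (if k \in m |: Psi then WMC s k / 2 else 0)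
        (if k \in m |: Psi then qstar (N0 s) (WMC s k / 2) (Rmin s) (gkn s k (kp s k)) else 0)
        (gkn s k (kp s k)).
  apply: sumr_ge0 => k _; apply: mulr_ge0; first exact: xind_ge0.
  have [Wk Rk hk gk _] := Hk k.
  case: (k \in m |: Psi); last by rewrite rho_b0.
  apply: rho_ge0 => //; try lra; last exact: ltW.
  by apply: qstar_ge0 => //; lra.
lra.
Qed.


Lemma upper (R : realType) K N (s : sys R K N) c1 (Psi : {set 'I_K}) (m : 'I_K) :
  well_formed s -> m \notin Psi ->
  (EE_T s m <= EE_P2 s c1 false Psi)%E ->
  (EE_P2 s c1 false (m |: Psi) <= EE_P2 s c1 false Psi)%E.
Proof.
move=> wf mP HT; apply/ereal_supP => y [p [pk [bk [qk [wk [Fe ->]]]]]].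
have [F' Er Ep Hnn [HWm HRm]] := split_pt wf mP Fe.
rewrite Er Ep.
have wf' := wf; move: wf' => [[N0p [xip xi1] Pcp Pmp Rm] [Hk Hn]].
have [_ Rp _ _ _] := Hk m.
have [pk0 bk0 qk0 wk0] := Hnn.
apply: med_le.
- exact: power_pos F'.
- have qp : 0 < qk m.
    rewrite lt0r qk0 andbT; apply/eqP => q0; move: HRm; rewrite q0 rho_p0; lra.
  have := divr_gt0 qp xip; have : 0 <= pk m / xi s by apply: divr_ge0; lra.
  lra.
- apply: ereal_sup_ubound.
  by exists p, (upd m pk 0), (upd m bk 0), (upd m qk 0), (upd m wk 0).
- apply: le_trans HT; apply: ereal_sup_ubound.
  by exists (pk m), (bk m), (qk m), (wk m).
Qed.

Lemma lower (R : realType) K N (s : sys R K N) c4 (Psi : {set 'I_K}) (m : 'I_K) :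
  well_formed s -> m \notin Psi ->
  (EE_P2 s false c4 Psi < EE_T s m)%E ->
  (EE_P2 s false c4 Psi < EE_P2 s false c4 (m |: Psi))%E.
Proof.
move=> wf mP HT.
move: (HT); rewrite /EE_T => HT'.
have [y Sy Hy] := ereal_sup_gt HT'.
move: Sy => /= [p0 [b0 [q0 [w0 [Hnn [HW [HR Ey]]]]]]].
subst y.
have [b' [q' [[b'0 q'p HW' HR' Hrat] w0p]]] := conv_T wf Hnn HW HR.
have wf' := wf; move: wf' => [[N0p [xip xi1] Pcp Pmp Rm] [Hk Hn]].
have [p00 _ _ w00] := Hnn.
set a := rho (N0 s) b' p0 (gkn s m (kp s m)) in Hrat.
set c := p0 / xi s + q' / xi s in Hrat.
have cp : 0 < c.
  rewrite /c; have := divr_gt0 q'p xip; have : 0 <= p0 / xi s by apply: divr_ge0; lra.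
  lra.
have a0 : 0 <= a.
  rewrite /a; have [_ _ _ gp _] := Hk m; apply: rho_ge0 => //; exact: ltW.
have Hac : (EE_P2 s false c4 Psi < (a / c)%:E)%E.
  by apply: lt_le_trans Hy _; rewrite lee_fin.
have key : forall p pk bk qk wk, P2_feasible s false c4 Psi p pk bk qk wk ->
   (((sc_rate s Psi p pk bk + a) / (sc_power s Psi p pk qk + c))%:E
      <= EE_P2 s false c4 (m |: Psi))%E.
  move=> p pk bk qk wk F.
  have [F' Er Ep] := comb_pt wf mP F (And4 p00 b'0 (ltW q'p) w00) HW' HR'.
  apply: ereal_sup_ubound.
  exists p, (upd m pk p0), (upd m bk b'), (upd m qk q'), (upd m wk w0); split => //.
  by rewrite Er Ep.
move: Hac key; case HE : (EE_P2 s false c4 Psi) => [e| |] Hac key.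
- rewrite lte_fin ltr_pdivlMr // in Hac.
  set d := a - e * c.
  have dp : 0 < d by rewrite /d; lra.
  have [e0|e0] := lerP e 0.
    have H1 : ((e - 1)%:E < EE_P2 s false c4 Psi)%E by rewrite HE lte_fin; lra.
    have [z Sz _] := ereal_sup_gt H1.
    move: Sz => /= [p [pk [bk [qk [wk [F _]]]]]].
    apply: lt_le_trans (key _ _ _ _ _ F).
    have A0 := rate_ge0 wf F; have Bp := power_pos wf F.
    rewrite lte_fin ltr_pdivlMr; last lra.
    have : e * sc_power s Psi p pk qk <= 0 by apply: mulr_le0_ge0 => //; lra.
    lra.
  set C1 := `|Cb s (e / 2)| + 1.
  have C1p : 0 < C1 by rewrite /C1; have := normr_ge0 (Cb s (e / 2)); lra.
  set t := d * e / (4 * C1).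
  have tp : 0 < t by rewrite /t; apply: divr_gt0; [apply: mulr_gt0|]; lra.
  set eta := Num.min (e / 4) t.
  have etap : 0 < eta by rewrite /eta lt_min; apply/andP; split => //; lra.
  have eta1 : eta <= e / 4 by rewrite /eta ge_min lexx.
  have eta2 : eta <= t by rewrite /eta ge_min lexx orbT.
  have H1 : ((e - eta)%:E < EE_P2 s false c4 Psi)%E by rewrite HE lte_fin; lra.
  have [z Sz Hz] := ereal_sup_gt H1.
  move: Sz => /= [p [pk [bk [qk [wk [F Ez]]]]]]; subst z.
  apply: lt_le_trans (key _ _ _ _ _ F).
  set A := sc_rate s Psi p pk bk in Hz *.
  set B := sc_power s Psi p pk qk in Hz *.
  have Bp : 0 < B := power_pos wf F.
  rewrite lte_fin ltr_pdivlMr // in Hz.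
  have Hb : A <= e / 2 * B + C1.
    have := bound_pt wf F (_ : 0 < e / 2); rewrite -/A -/B.
    have := ler_norm (Cb s (e / 2)); rewrite /C1; move=> h1 h2.
    have := h2 ltac:(lra); lra.
  have HB1 : e / 4 * B <= (e / 2 - eta) * B by apply: ler_wpM2r; lra.
  have HB2 : e * B < 4 * C1.
    have : (e - eta) * B = e * B - eta * B by ring.
    have : (e / 2 - eta) * B = e / 2 * B - eta * B by ring.
    have : e / 4 * B = (e * B) / 4 by ring.
    lra.
  have HB3 : eta * B <= t * B by apply: ler_wpM2r; lra.
  have HB4 : t * (4 * C1) = d * e.
    by rewrite /t divfK //; apply/eqP; lra.
  have HB5 : t * (e * B) < t * (4 * C1) by rewrite ltr_pM2l.
  have HB6 : e * (t * B) < e * d.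
    by rewrite mulrCA; apply: lt_le_trans HB5 _; rewrite HB4 mulrC.
  have HB7 : t * B < d by rewrite -(ltr_pM2l e0).
  rewrite lte_fin ltr_pdivlMr; last lra.
  have : (e - eta) * B = e * B - eta * B by ring.
  have : e * (B + c) = e * B + e * c by ring.
  have Ed : d = a - e * c by [].
  lra.
- by rewrite ltNge leey in Hac.
- have [p [pk [bk [qk [wk F]]]]] := feas_exists c4 wf mP.
  apply: (@lt_le_trans _ _ ((sc_rate s (m |: Psi) p pk bk
                               / sc_power s (m |: Psi) p pk qk)%:E)).
    exact: ltNyr.
  apply: ereal_sup_ubound; by exists p, pk, bk, qk, wk.
Qed.

Unset Implicit Arguments.
Local Open Scope ereal_scope.

Theorem theorem4 (R : realType) (K N : nat) (s : sys R K N)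
    (Psi : {set 'I_K}) (m : 'I_K) :
  well_formed s -> m \notin Psi ->
  [/\ (* (1) C1 and C4 removed *)
      (EE_P2 s false false Psi < EE_P2 s false false (m |: Psi)
         <-> EE_P2 s false false Psi < EE_T s m),
      (* (2) C1 removed, C4 kept *)
      (EE_P2 s false true Psi < EE_T s m ->
         EE_P2 s false true Psi < EE_P2 s false true (m |: Psi))
    & (* (3) C4 removed, C1 kept *)
      (EE_P2 s true false Psi < EE_P2 s true false (m |: Psi) ->
         EE_P2 s true false Psi < EE_T s m)].
Proof.
move=> wf mP.
have fwd : forall c1, EE_P2 s c1 false Psi < EE_P2 s c1 false (m |: Psi) ->
    EE_P2 s c1 false Psi < EE_T s m.
  move=> c1 H; rewrite ltNge; apply/negP => HT.
  by move: (upper wf mP HT); rewrite leNgt H.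
split.
- split; [exact: fwd | exact: lower].
- exact: lower.
- exact: fwd.
Qed.
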